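(* Let $H$ be a digraph (possibly with loops) and let $D$ be an $H$-colored quasi-transitive digraph. If $k \geq 4$, then $D$ has a $(k,H)$-kernel.
   Context: All digraphs are finite. A digraph $D$ is quasi-transitive if for all distinct $u,v\in V(D)$, whenever there is a directed $uv$-path of length $2$, $u$ and $v$ are joined by an arc (in some direction). $D$ has no loops and comes with a map $\rho: A(D)\to V(H)$. For a walk $W=(x_0,\ldots,x_n)$ in $D$, there is an obstruction on $x_i$ if $(\rho(x_{i-1},x_i),\rho(x_i,x_{i+1})) \notin A(H)$; for an open walk this is considered at internal vertices $x_i$, $1\le i\le n-1$, for a closed walk at all $i\in\{0,\ldots,n-1\}$ with indices modulo $n$. $O_H(W)$ is the set of indices with an obstruction; the $H$-length is $l_H(W)=|O_H(W)|+1$ for open $W$ and $|O_H(W)|$ for closed $W$. A $(k,H)$-kernel ($k\ge2$) is a set $S\subseteq V(D)$ such that for every two distinct $u,v\in S$ every directed $uv$-path in $D$ has $H$-length at least $k$, and for every $x\in V(D)\setminus S$ there is a directed path from $x$ to a vertex of $S$ of $H$-length at most $k-1$. *)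

(* Defs.v *)
From mathcomp Require Import all_boot.
Set Implicit Arguments. Unset Strict Implicit. Unset Printing Implicit Defensive.

(* H = (VH, AH) : a digraph possibly with loops.
   D = (V, A) : a finite digraph; rho : V -> V -> VH gives the colour of arc (u,v)
   (values on non-arcs are irrelevant). *)

Section HColored.
Variables (VH : finType) (AH : rel VH) (V : finType) (A : rel V) (rho : V -> V -> VH).

Definition quasi_transitive : Prop :=
  forall u w v : V, u != v -> A u w -> A w v -> A u v || A v u.

Definition dipath (x : V) (p : seq V) : bool := path A x p && uniq (x :: p).

Fixpoint obstructions (s : seq V) : nat :=
  match s with
  | x :: ((y :: z :: _) as t) => (~~ AH (rho x y) (rho y z)) + obstructions t
  | _ => 0
  end.

Definition hlength (s : seq V) : nat := (obstructions s).+1.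

Definition kH_kernel (k : nat) (S : {set V}) : Prop :=
  (forall u v : V, u \in S -> v \in S -> u != v ->
     forall p : seq V, dipath u p -> last u p = v -> k <= hlength (u :: p)) /\
  (forall x : V, x \notin S ->
     exists p : seq V, [/\ dipath x p, last x p \in S & hlength (x :: p) <= k.-1]).

End HColored.

(* Main.v *)
Require Import Defs.
From mathcomp Require Import all_boot.
From mathcomp Require Import zify.
Set Implicit Arguments. Unset Strict Implicit.

Lemma exmax (T : finType) (P : pred T) (f : T -> nat) x0 :
  P x0 -> exists2 v, P v & forall w, P w -> f w <= f v.
Proof.
move=> P0; case: (arg_maxnP f P0) => v Pv Hv; exists v => // w Pw.
Qed.

Lemma exmin (T : finType) (P : pred T) (f : T -> nat) x0 :
  P x0 -> exists2 v, P v & forall w, P w -> f v <= f w.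
Proof.
move=> P0; case: (arg_minnP f P0) => v Pv Hv; exists v => // w Pw.
Qed.

Lemma obs_le (VH : finType) (AH : rel VH) (V : finType) (rho : V -> V -> VH)
  (s : seq V) : obstructions AH rho s <= (size s).-2.
Proof.
elim: s => [|x [|y [|z t]] IH] //=.
rewrite -add1n; apply: leq_add => //; first exact: leq_b1.
Qed.

Lemma domB (V : finType) (A : rel V) (x v : V) :
  quasi_transitive A -> ~~ connect A v x ->
  forall p y, A x y -> path A y p -> connect A v y -> A x (last y p).
Proof.
move=> qt nvx; elim=> [|w p IH] y //= Axy /andP[Ayw Pp] vy.
have vw : connect A v w by apply: connect_trans vy (connect1 Ayw).
have xw : x != w by apply/eqP=> exw; move: nvx; rewrite exw vw.
apply: IH => //.
case/orP: (qt _ _ _ xw Axy Ayw) => // Awx.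
by move: nvx; rewrite (connect_trans vw (connect1 Awx)).
Qed.

Lemma cross (V : finType) (A : rel V) (v : V) :
  irreflexive A -> quasi_transitive A ->
  forall p x, path A x p -> last x p = v -> ~~ connect A v x ->
  A x v \/ exists2 a, A x a & A a v.
Proof.
move=> irr qt; elim=> [|y p IH] x /=.
  by move=> _ ->; rewrite connect0.
move=> /andP[Axy Pp] Lv nvx.
case vy: (connect A v y).
  by left; rewrite -Lv; exact: (domB qt nvx Axy Pp vy).
have nvy : ~~ connect A v y by rewrite vy.
right; exists y => //.
have yv : y != v by apply/eqP=> e; rewrite e connect0 in vy.
case: (IH y Pp Lv nvy) => // -[a Aya Aav].
case/orP: (qt _ _ _ yv Aya Aav) => // Avy.
by rewrite (connect1 Avy) in vy.
Qed.

Definition short3 (V : finType) (A : rel V) (x v : V) :=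
  exists q : seq V, [/\ path A x q, last x q = v & size q <= 3].

Lemma theorem16_aux (V : finType) (A : rel V) (indeg : V -> nat) (v : V) :
  irreflexive A -> quasi_transitive A ->
  (forall x, connect A v x -> indeg x <= indeg v) ->
  (forall x, connect A v x -> A v x ->
     (forall w, A w v -> connect A v w -> A w x) -> indeg v < indeg x) ->
  forall p x, path A x p -> last x p = v -> connect A v x -> short3 A x v.
Proof.
move=> irr qt Hmax Hlt; elim=> [|y p IH] x /=.
  by move=> _ <- _; exists [::].
move=> /andP[Axy Pp] Lv vx.
have vy : connect A v y by apply: connect_trans vx (connect1 Axy).
case: (IH y Pp Lv vy) => q [Pq Lq Sq].
case: q Pq Lq Sq => [|a [|b [|c q]]] //=.
- by move=> _ <- _; exists [:: y] => /=; rewrite Axy.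
- by move=> /andP[Aya _] <- _; exists [:: y; a] => /=; rewrite Axy Aya.
- by move=> /and3P[Aya Aab _] <- _; exists [:: y; a; b] => /=; rewrite Axy Aya Aab.
case: q => // /and4P[Aya Aab Abc _] Lc _; rewrite /= in Lc; rewrite -{}Lc in Hlt Hmax vx *.
case: (boolP [|| x == c, A x c, [exists z, A x z && A z c] |
                [exists z, [exists z', [&& A x z, A z z' & A z' c]]]]).
  case/or4P.
  - by move/eqP=> ->; exists [::].
  - by move=> Axc; exists [:: c] => /=; rewrite Axc.
  - by case/existsP=> z /andP[H1 H2]; exists [:: z; c] => /=; rewrite H1 H2.
  - by case/existsP=> z /existsP[z' /and3P[H1 H2 H3]]; exists [:: z; z'; c] => /=; rewrite H1 H2 H3.
rewrite !negb_or => /and4P[nxc nAxc nex2 nex3].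
have nw2 : forall z, A x z -> A z c -> False.
  by move=> z H1 H2; move: nex2; rewrite negb_exists => /forallP/(_ z); rewrite H1 H2.
have nw3 : forall z z', A x z -> A z z' -> A z' c -> False.
  move=> z z' H1 H2 H3; move: nex3; rewrite negb_exists => /forallP/(_ z).
  by rewrite negb_exists => /forallP/(_ z'); rewrite H1 H2 H3.
have xa : x != a by apply/eqP=> e; apply: (nw2 b); rewrite ?e.
have Aax : A a x.
  case/orP: (qt _ _ _ xa Axy Aya) => // Axa; by case: (nw3 a b).
have ac : a != c by apply/eqP=> e; apply: (nw2 y); rewrite // -e.
have Aca : A c a.
  case/orP: (qt _ _ _ ac Aab Abc) => // Aac; by case: (nw3 y a).
have cx : c != x by rewrite eq_sym.
have Acx : A c x.
  by case/orP: (qt _ _ _ cx Aca Aax) => // Axc; rewrite Axc in nAxc.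
have := Hlt x vx Acx.
rewrite ltnNge (Hmax x vx) /= => H; suff: false by []; apply: H => w Awc vw.
have wx : w != x by apply/eqP=> e; rewrite -e Awc in nAxc.
case/orP: (qt _ _ _ wx Awc Acx) => // Axw.
by case: (nw2 w).
Qed.

Unset Implicit Arguments.

Theorem theorem16 (VH : finType) (AH : rel VH) (V : finType) (A : rel V)
    (rho : V -> V -> VH) (k : nat) :
  irreflexive A -> quasi_transitive A -> 4 <= k ->
  exists S : {set V}, kH_kernel AH A rho k S.
Proof.
move=> irr qt k4.
pose term v := [forall y, connect A v y ==> connect A y v].
pose indeg w := #|[set z | A z w & connect A w z]|.
pose n := #|V|.
pose key w := indeg w * n + enum_rank w.
pose S := [set v | term v & [forall w, connect A v w ==> (key w <= key v)]].
exists S.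
have keyinj : forall u v, key u = key v -> u = v.
  move=> u v; rewrite /key => e.
  have := congr1 (modn^~ n) e; rewrite /= !modnMDl !modn_small ?ltn_ord //.
  by move/ord_inj/(can_inj enum_rankK).
have keymono : forall u v, key u <= key v -> indeg u <= indeg v.
  move=> u v; rewrite /key => H.
  have hv := ltn_ord (enum_rank v).
  rewrite leqNgt; apply/negP => lt.
  have : (indeg v).+1 * n <= indeg u * n by rewrite leq_mul2r lt orbT.
  rewrite mulSn; rewrite -/n in hv; move: H hv; move: (indeg u * n) (indeg v * n) (nat_of_ord (enum_rank u)) (nat_of_ord (enum_rank v)) => X Y c d; lia.
have termS : forall v, v \in S -> term v by move=> v; rewrite inE => /andP[].
have Sreach : forall x, term x -> exists2 v, v \in S & connect A x v.
  move=> x tx; case: (@exmax _ (connect A x) key x (connect0 A x)) => v xv Hv.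
  exists v => //; rewrite inE; apply/andP; split.
  - apply/forallP => y; apply/implyP => vy; have xy := connect_trans xv vy.
    move/forallP/(_ y)/implyP: tx => /(_ xy) yx; exact: connect_trans yx xv.
  - apply/forallP => w; apply/implyP => vw; exact: Hv (connect_trans xv vw).
have termx : forall x, exists2 y, term y & connect A x y.
  move=> x; case: (@exmin _ (connect A x) (fun y => #|[set z | connect A y z]|) x (connect0 A x)) => y xy Hy.
  exists y => //; apply/forallP => z; apply/implyP => yz; apply/negPn/negP => nzy.
  have := Hy z (connect_trans xy yz).
  apply/negP; rewrite -ltnNge; apply: proper_card; apply/properP; split.
  - apply/subsetP => w; rewrite !inE => zw; exact: connect_trans yz zw.
  - by exists y; rewrite !inE ?connect0.
split.
- move=> u v uS vS uv p /andP[Pp _] Lv; exfalso.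
  have uv' : connect A u v by apply/connectP; exists p; rewrite ?Lv.
  have vu : connect A v u by move: (termS u uS) => /forallP/(_ v)/implyP; apply.
  move: uS vS; rewrite !inE => /andP[_ /forallP/(_ v)/implyP/(_ uv') h1].
  move=> /andP[_ /forallP/(_ u)/implyP/(_ vu) h2].
  by move/eqP: uv; apply; apply: keyinj; apply/eqP; rewrite eqn_leq h1 h2.
- move=> x xS.
  have [v vS xv] : exists2 v, v \in S & connect A x v.
    case: (termx x) => y ty xy; case: (Sreach y ty) => v vS yv.
    by exists v => //; exact: connect_trans xy yv.
  have xv' : x != v by apply: contraNneq xS => ->.
  suff [q [Pq Lq Sq]] : short3 A x v.
    move: Lq; case: (shortenP Pq) => p' Pp' Up' Sub Lp'.
    exists p'; split.
    + by rewrite /dipath Pp' Up'.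
    + by rewrite Lp'.
    + have sz : size p' <= 3.
        apply: leq_trans (uniq_leq_size _ Sub) Sq; by case/andP: Up'.
      have ne : 0 < size p'.
        rewrite lt0n size_eq0; apply/eqP => e; move: Lp'; rewrite e /= => e'.
        by rewrite e' eqxx in xv'.
      rewrite /hlength; have := obs_le AH rho (x :: p'); move: (obstructions AH rho (x :: p')) => o /=; move: sz ne k4; clear; move: (size p') => s; lia.
  case vx: (connect A v x).
    have [p Pp Lp] := connectP xv.
    apply: (@theorem16_aux _ A indeg v irr qt _ _ p x Pp (esym Lp) vx).
    + move=> y vy; apply: keymono.
      by move: vS; rewrite inE => /andP[_ /forallP/(_ y)/implyP/(_ vy)].
    + move=> y vy Avy Hw; rewrite /indeg; apply: proper_card; apply/properP; split.
      * apply/subsetP => w; rewrite !inE => /andP[Awv vw]; rewrite Hw //=.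
        apply: connect_trans vw.
        by move: (termS v vS) => /forallP/(_ y)/implyP; apply.
      * exists v; rewrite !inE ?irr //= Avy /=.
        by move: (termS v vS) => /forallP/(_ y)/implyP; apply.
  have nvx : ~~ connect A v x by rewrite vx.
  have [p Pp Lp] := connectP xv.
  case: (cross irr qt Pp (esym Lp) nvx) => [Axv | [a Axa Aav]].
  + by exists [:: v]; rewrite /= Axv.
  + by exists [:: a; v]; rewrite /= Axa Aav.
Qed.
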